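(* Let $L=\mathbb{Z}\times\mathbb{Z}$ with the product $$(p,q)\cdot(p',q')=\Bigl(p+p',\ q+q'+\binom{p}{2}\binom{p'}{2}\Bigr).$$ Then $L$ is a commutative loop which is torsion-free nilpotent of class $4$, with $$D_2L=D_3L=D_4L=\{(0,q)\mid q\in\mathbb{Z}\},$$ while $\mathrm{LMlt}(L)$ is nilpotent of class $3$.
   Context: Here $\binom{p}{2}=p(p-1)/2$ for $p\in\mathbb{Z}$. A loop is a set with a product and two-sided identity in which all left multiplications $x\mapsto ax$ and right multiplications $x\mapsto xa$ are bijective. $\mathrm{LMlt}(L)$ is the group of permutations of $L$ generated by the left multiplications $L_a\colon x\mapsto ax$. The loop algebra $\mathbb{Q}L$ has basis $L$ with bilinearly extended product; $I$ is the kernel of the linear map $\mathbb{Q}L\to\mathbb{Q}$ sending each element of $L$ to $1$; $I^k$ is the ideal spanned by all products (any bracketing) of at least $k$ elements of $I$; $D_kL=\{g\in L\mid g-1\in I^k\}$. $L$ is torsion-free nilpotent of class $n$ if $D_{n+1}L$ is trivial and $D_nL$ is not. A group $G$ is nilpotent of class $c$ if $\gamma_{c+1}G=1\neq\gamma_cG$, where $\gamma_1G=G$, $\gamma_{k+1}G=[G,\gamma_kG]$. *)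

(* Defs.v *)
From mathcomp Require Import all_boot all_order all_algebra.
Set Implicit Arguments. Unset Strict Implicit. Unset Printing Implicit Defensive.
Import GRing.Theory Num.Theory.
Local Open Scope ring_scope.

Definition is_loop (T : Type) (mul : T -> T -> T) (e : T) : Prop :=
  [/\ (forall x, mul e x = x), (forall x, mul x e = x),
      (forall a, bijective (mul a)) & (forall a, bijective (fun x => mul x a))].

(* An element of QL is represented by a finite formal combination
   sum_i a_i g_i, given as a list of pairs (a_i, g_i); two representations
   denote the same element iff their coefficient functions agree. *)
Definition coef (T : eqType) (s : seq (rat * T)) (g : T) : rat :=
  \sum_(x <- s) (if x.2 == g then x.1 else 0).

Definition aug (T : Type) (s : seq (rat * T)) : rat := \sum_(x <- s) x.1.

Definition QLmul (T : Type) (mul : T -> T -> T) (s t : seq (rat * T)) :=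
  [seq (x.1 * y.1, mul x.2 y.2) | x <- s, y <- t].

(* IProd mul m u : u is a product (with some bracketing) of m elements of I *)
Inductive IProd (T : Type) (mul : T -> T -> T) : nat -> seq (rat * T) -> Prop :=
  | IProd_base s : aug s = 0 -> IProd mul 1 s
  | IProd_mul m n s t : IProd mul m s -> IProd mul n t ->
                        IProd mul (m + n) (QLmul mul s t).

(* c (a coefficient function) lies in I^k: the linear span of all products
   of at least k elements of I *)
Definition in_Ipow (T : eqType) (mul : T -> T -> T) (k : nat) (c : T -> rat) : Prop :=
  exists r : seq (rat * seq (rat * T)),
    (forall u, u \in r -> exists2 m, (k <= m)%N & IProd mul m u.2) /\
    (forall g, c g = \sum_(u <- r) u.1 * coef u.2 g).

(* D_k L = { g | g - 1 \in I^k } *)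
Definition Dsub (T : eqType) (mul : T -> T -> T) (e : T) (k : nat) (g : T) : Prop :=
  in_Ipow mul k (coef [:: (1, g); (-1, e)]).

Definition tf_nilpotent_class (T : eqType) (mul : T -> T -> T) (e : T) (n : nat) : Prop :=
  (forall g, Dsub mul e n.+1 g -> g = e) /\ (exists g, Dsub mul e n g /\ g <> e).

Inductive gen_group (T : Type) (S : (T -> T) -> Prop) : (T -> T) -> Prop :=
  | gg_id : gen_group S id
  | gg_gen f : S f -> gen_group S f
  | gg_comp f g : gen_group S f -> gen_group S g -> gen_group S (f \o g)
  | gg_inv f g : gen_group S f -> cancel f g -> cancel g f -> gen_group S g
  | gg_ext f g : gen_group S f -> f =1 g -> gen_group S g.

Definition LMlt (T : Type) (mul : T -> T -> T) : (T -> T) -> Prop :=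
  gen_group (fun f => exists a, f = mul a).

(* commutators [g,h] = g^-1 h^-1 g h with g in G, h in H *)
Definition comm_set (T : Type) (G H : (T -> T) -> Prop) : (T -> T) -> Prop :=
  fun c => exists g h g' h', [/\ G g, H h, cancel g g' /\ cancel g' g,
                                 cancel h h' /\ cancel h' h &
                                 c = g' \o h' \o g \o h].

(* lower central series: lcs G 1 = G, lcs G (k+1) = [G, lcs G k] *)
Fixpoint lcs (T : Type) (G : (T -> T) -> Prop) (k : nat) : (T -> T) -> Prop :=
  match k with
  | 0 => G
  | 1 => G
  | k'.+1 => gen_group (comm_set G (lcs G k'))
  end.

Definition group_nilpotent_class (T : Type) (G : (T -> T) -> Prop) (c : nat) : Prop :=
  (forall f, lcs G c.+1 f -> f =1 id) /\ (exists f, lcs G c f /\ ~ (f =1 id)).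

Definition binom2 (p : int) : int := divz (p * (p - 1)) 2.

Definition Lmul (x y : int * int) : int * int :=
  (x.1 + y.1, x.2 + y.2 + binom2 x.1 * binom2 y.1).

Definition Le : int * int := (0, 0).

(* Main.v *)
Require Import Defs.
From mathcomp Require Import all_boot all_order all_algebra zify ring lra.
Set Implicit Arguments. Unset Strict Implicit. Unset Printing Implicit Defensive.
Local Open Scope ring_scope.
Import GRing.Theory Num.Theory.

Lemma b2 (p : int) : binom2 p * 2 = p * (p - 1).
Proof.
have [t ht] : exists t : int, p * (p - 1) = t * 2.
  have e := divz_eq p 2.
  have h0 : 0 <= (p %% 2)%Z by apply: modz_ge0.
  have h1 : ((p %% 2)%Z < 2) by apply: ltz_pmod.
  set k := (p %/ 2)%Z in e. set r := (p %% 2)%Z in e h0 h1.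
  have : (r = 0) \/ (r = 1) by lia.
  case=> hr; rewrite hr in e.
    exists (k * (k * 2 - 1)); rewrite e; ring.
  exists (k * (k * 2 + 1)); rewrite e; ring.
by rewrite /binom2 ht mulzK.
Qed.
Lemma b2D (p s : int) : binom2 (p + s) = binom2 p + binom2 s + p * s.
Proof. have h1 := b2 p. have h2 := b2 s. have h3 := b2 (p+s). nia. Qed.
Lemma b20 : binom2 0 = 0. Proof. by []. Qed.
Lemma b21 : binom2 1 = 0. Proof. by []. Qed.
Lemma b22 : binom2 2 = 1. Proof. by []. Qed.
Lemma b2N (s : int) : binom2 (- s) = s * s - binom2 s.
Proof. have := b2D s (-s). rewrite subrr b20. lia. Qed.

Notation T := (int * int)%type.
Definition ev (f : T -> rat) (s : seq (rat * T)) := \sum_(x <- s) x.1 * f x.2.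

Lemma ev_mul f (g1 h1 g2 h2 g3 h3 : T -> rat) s t :
  (forall x y, f (Lmul x y) = g1 x * h1 y + g2 x * h2 y + g3 x * h3 y) ->
  ev f (QLmul Lmul s t) = ev g1 s * ev h1 t + ev g2 s * ev h2 t + ev g3 s * ev h3 t.
Proof.
move=> hf; rewrite /ev /QLmul big_allpairs_dep /=.
rewrite !big_distrl /= -!big_split /=; apply: eq_bigr => x _.
rewrite !big_distrr /= -!big_split /=; apply: eq_bigr => y _.
rewrite hf; ring.
Qed.

Lemma aug_ev s : aug s = ev (fun _ => 1) s.
Proof. by rewrite /aug /ev; apply: eq_bigr => x _; rewrite mulr1. Qed.

Lemma ev0 s : ev (fun _ => 0) s = 0.
Proof. by rewrite /ev big1 // => x _; rewrite mulr0. Qed.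

Lemma IProd_aug m s : IProd Lmul m s -> aug s = 0.
Proof.
elim=> // m1 n1 s1 t1 _ h1 _ h2.
rewrite aug_ev (@ev_mul _ (fun _ => 1) (fun _ => 1) (fun _ => 0) (fun _ => 0) (fun _ => 0) (fun _ => 0)).
  by rewrite -!aug_ev h1 !ev0; ring.
by move=> *; ring.
Qed.

Definition fp (x : T) : rat := x.1%:~R.
Definition fB (x : T) : rat := (binom2 x.1)%:~R.
Definition fq (x : T) : rat := x.2%:~R.


Lemma IProd_p m s : IProd Lmul m s -> (2 <= m)%N -> ev fp s = 0.
Proof.
case=> [s0 _|m1 n1 s1 t1 h1 h2 _]; first by [].
rewrite (@ev_mul _ fp (fun _ => 1) (fun _ => 1) fp (fun _ => 0) (fun _ => 0)).
  by rewrite -!aug_ev (IProd_aug h1) (IProd_aug h2) !ev0; ring.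
by move=> x y; rewrite /fp /= rmorphD /=; ring.
Qed.

Lemma IProd_B m s : IProd Lmul m s -> (3 <= m)%N -> ev fB s = 0.
Proof.
case=> [s0 _|m1 n1 s1 t1 h1 h2 hm]; first by [].
rewrite (@ev_mul _ fB (fun _ => 1) (fun _ => 1) fB fp fp).
  rewrite -!aug_ev (IProd_aug h1) (IProd_aug h2).
  have [hm1|hm1] := leqP 2 m1; first by rewrite (IProd_p h1 hm1); ring.
  rewrite (IProd_p h2); first ring. lia.
by move=> x y; rewrite /fp /fB /= b2D !rmorphD rmorphM /=; ring.
Qed.

Lemma IProd_q m s : IProd Lmul m s -> (5 <= m)%N -> ev fq s = 0.
Proof.
case=> [s0 _|m1 n1 s1 t1 h1 h2 hm]; first by [].
rewrite (@ev_mul _ fq (fun _ => 1) (fun _ => 1) fq fB fB).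
  rewrite -!aug_ev (IProd_aug h1) (IProd_aug h2).
  have [hm1|hm1] := leqP 3 m1; first by rewrite (IProd_B h1 hm1); ring.
  rewrite (IProd_B h2); first ring. lia.
by move=> x y; rewrite /fq /fB /= !rmorphD rmorphM /=; ring.
Qed.


Lemma ev_coef (f : T -> rat) (s : seq (rat * T)) (X : seq T) :
  uniq X -> {subset [seq x.2 | x <- s] <= X} ->
  \sum_(h <- X) coef s h * f h = ev f s.
Proof.
move=> uX; elim: s => [|x s IH] sub.
  by rewrite /ev big_nil big1 // => h _; rewrite /coef big_nil mul0r.
rewrite /ev big_cons -/(ev f s) -IH; last by move=> y ys; apply: sub; rewrite inE ys orbT.
rewrite /coef.
under eq_bigr => h _ do rewrite big_cons mulrDl.
rewrite big_split /=; congr (_ + _).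
have xX : x.2 \in X by apply: sub; rewrite inE eqxx.
rewrite (bigD1_seq x.2) //= eqxx big1 ?addr0 // => h /negPf hx.
by rewrite eq_sym hx mul0r.
Qed.

Lemma transfer (c : T -> rat) (f : T -> rat) (r : seq (rat * seq (rat * T))) (X : seq T) :
  uniq X -> (forall u, u \in r -> {subset [seq x.2 | x <- u.2] <= X}) ->
  (forall g, c g = \sum_(u <- r) u.1 * coef u.2 g) ->
  \sum_(h <- X) c h * f h = \sum_(u <- r) u.1 * ev f u.2.
Proof.
move=> uX sub hc.
under eq_bigr => h _ do rewrite hc big_distrl /=.
rewrite exchange_big /=; apply: eq_big_seq => u ur.
rewrite -(ev_coef f uX (sub u ur)) big_distrr /=.
by apply: eq_bigr => h _; rewrite mulrA.
Qed.

Lemma Dsub_ev k g (f : T -> rat) :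
  Dsub Lmul Le k g ->
  (forall m s, IProd Lmul m s -> (k <= m)%N -> ev f s = 0) ->
  f g = f Le.
Proof.
move=> [r [hr hc]] hf.
set X := undup (g :: Le :: flatten [seq [seq x.2 | x <- u.2] | u <- r]).
have uX : uniq X by apply: undup_uniq.
have sub : forall u, u \in r -> {subset [seq x.2 | x <- u.2] <= X}.
  move=> u ur y yu; rewrite mem_undup !inE; apply/orP; right; apply/orP; right.
  by apply/flattenP; exists [seq x.2 | x <- u.2] => //; apply/mapP; exists u.
have := transfer f uX sub hc.
rewrite [X in _ = X]big1_seq; last first.
  move=> u /andP[_ ur]; have [m km hm] := hr u ur; by rewrite (hf _ _ hm km) mulr0.
rewrite (ev_coef f uX); last first.
  move=> y; rewrite !inE => /orP[] /eqP ->; rewrite mem_undup !inE eqxx ?orbT //.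
rewrite /ev !big_cons big_nil /=.
move=> h; apply/eqP; rewrite -subr_eq0; apply/eqP; rewrite -h; ring.
Qed.

Lemma Dsub_2 k g : (2 <= k)%N -> Dsub Lmul Le k g -> g.1 = 0.
Proof.
move=> hk hD.
have h : fp g = fp Le by apply: (Dsub_ev hD) => m s hs hm; apply: (IProd_p hs); lia.
by move/eqP: h; rewrite /fp eqr_int => /eqP.
Qed.

Lemma Dsub_5 k g : (5 <= k)%N -> Dsub Lmul Le k g -> g = Le.
Proof.
move=> hk hD; have h1 : g.1 = 0 by apply: (Dsub_2 _ hD); lia.
have h : fq g = fq Le by apply: (Dsub_ev hD) => m s hs hm; apply: (IProd_q hs); lia.
move/eqP: h; rewrite /fq eqr_int => /eqP h2.
by case: g h1 h2 {hD} => a b /= -> ->.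
Qed.


Fixpoint coefc (s : seq (rat * T)) (g : T) : rat :=
  if s is x :: s' then (if x.2 == g then x.1 else 0) + coefc s' g else 0.

Lemma coefcE (s : seq (rat * T)) (g : T) : coef s g = coefc s g.
Proof. by elim: s => [|x s IH]; rewrite /coef ?big_nil ?big_cons //= -IH. Qed.

Lemma coef_out (s : seq (rat * T)) (g : T) : g \notin [seq x.2 | x <- s] -> coef s g = 0.
Proof.
rewrite coefcE; elim: s => [|x s IH] //=; rewrite inE negb_or => /andP[h1 h2].
by rewrite IH // eq_sym (negPf h1) addr0.
Qed.

Lemma coef_check (S S' : seq (rat * T)) :
  all (fun h => coefc S h == coefc S' h) ([seq x.2 | x <- S] ++ [seq x.2 | x <- S']) ->
  forall g, coef S g = coef S' g.
Proof.
move=> /allP h g.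
case hg : (g \in [seq x.2 | x <- S] ++ [seq x.2 | x <- S']).
  by rewrite !coefcE; apply/eqP; apply: h.
move: hg; rewrite mem_cat => /negbT; rewrite negb_or => /andP[h1 h2].
by rewrite !coef_out.
Qed.

Definition sflat (r : seq (rat * seq (rat * T))) : seq (rat * T) :=
  flatten [seq [seq (u.1 * x.1, x.2) | x <- u.2] | u <- r].

Lemma sflatE (r : seq (rat * seq (rat * T))) (g : T) : \sum_(u <- r) u.1 * coef u.2 g = coef (sflat r) g.
Proof.
rewrite /coef /sflat big_flatten /= big_map; apply: eq_bigr => u _.
rewrite big_map big_distrr /=; apply: eq_bigr => x _.
by case: eqP => _; rewrite ?mulr0.
Qed.

Definition Dl : seq (rat * T) := [:: (1, (1,0)); (-1, (0,0))].
Definition ml : seq (rat * T) := [:: (1, (-1,0)); (-1, (0,0))].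
Definition v0 := QLmul Lmul Dl ml.
Definition w := QLmul Lmul Dl Dl.
Definition cc := QLmul Lmul Dl (QLmul Lmul Dl (QLmul Lmul Dl ml)).
Definition S1 := QLmul Lmul ml cc.
Definition S2 := QLmul Lmul ml (QLmul Lmul v0 w).
Definition S3 := QLmul Lmul v0 w.
Definition rr : seq (rat * seq (rat * T)) := [:: (1, S1); (-1, S2); (1, cc); (-1, S3)].

Definition z1 : seq (rat * T) := [:: (1, (0,1)); (-1, (0,0))].
Lemma base_check : all (fun h => coefc z1 h == coefc (sflat rr) h)
   ([seq x.2 | x <- z1] ++ [seq x.2 | x <- sflat rr]).
Proof. vm_compute. reflexivity. Qed.

Lemma IP_D : IProd Lmul 1 Dl.
Proof. by apply: IProd_base; rewrite /aug !big_cons big_nil /= addr0 subrr. Qed.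
Lemma IP_m : IProd Lmul 1 ml.
Proof. by apply: IProd_base; rewrite /aug !big_cons big_nil /= addr0 subrr. Qed.

Lemma base_Ipow : in_Ipow Lmul 4 (coef z1).
Proof.
exists rr; split.
  have hv0 : IProd Lmul 2 v0 by apply: (IProd_mul IP_D IP_m).
  have hw : IProd Lmul 2 w by apply: (IProd_mul IP_D IP_D).
  have hcc : IProd Lmul 4 cc by apply: (IProd_mul IP_D (IProd_mul IP_D (IProd_mul IP_D IP_m))).
  have hS3 : IProd Lmul 4 S3 by apply: (IProd_mul hv0 hw).
  move=> u; rewrite !inE => /orP[/eqP->|/orP[/eqP->|/orP[/eqP->|/eqP->]]] /=.
  - by exists 5%N => //; apply: (IProd_mul IP_m hcc).
  - by exists 5%N => //; apply: (IProd_mul IP_m hS3).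
  - by exists 4%N.
  - by exists 4%N.
move=> g; rewrite sflatE; apply: coef_check; exact: base_check.
Qed.


Definition shift (i : int) (s : seq (rat * T)) : seq (rat * T) :=
  [seq (x.1, (x.2.1, x.2.2 + i)) | x <- s].

Lemma shift_mul i s t : shift i (QLmul Lmul s t) = QLmul Lmul (shift i s) t.
Proof.
rewrite /shift /QLmul; elim: s => //= x s IH.
rewrite map_cat IH -map_comp; congr (_ ++ _); apply: eq_map => y /=.
rewrite /Lmul /=; congr (_, (_, _)); ring.
Qed.

Lemma IProd_shift i m s : IProd Lmul m s -> IProd Lmul m (shift i s).
Proof.
elim=> [s0 h|m1 n1 s1 t1 _ h1 h2 _].
  by apply: IProd_base; rewrite /aug big_map.
by rewrite shift_mul; apply: IProd_mul.
Qed.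

Lemma coef_shift i (s : seq (rat * T)) (g : T) : coef (shift i s) g = coef s (g.1, g.2 - i).
Proof.
rewrite /coef big_map; apply: eq_bigr => x _ /=.
case: x => c [a b]; case: g => a' b' /=.
have -> : ((a, b + i) == (a', b')) = ((a, b) == (a', b' - i)).
  by rewrite !xpair_eqE; congr andb; apply/eqP/eqP; lia.
by [].
Qed.

Lemma Ipow_ext k (c c' : T -> rat) : c =1 c' -> in_Ipow Lmul k c -> in_Ipow Lmul k c'.
Proof. by move=> e [r [h1 h2]]; exists r; split=> // g; rewrite -e. Qed.

Lemma Ipow_mono k k' (c : T -> rat) : (k <= k')%N -> in_Ipow Lmul k' c -> in_Ipow Lmul k c.
Proof.
move=> kk [r [h1 h2]]; exists r; split=> // u ur.
by have [m hm hp] := h1 u ur; exists m => //; apply: leq_trans hm.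
Qed.

Lemma Ipow_add k (c1 c2 : T -> rat) : in_Ipow Lmul k c1 -> in_Ipow Lmul k c2 ->
  in_Ipow Lmul k (fun g => c1 g + c2 g).
Proof.
move=> [r1 [h1 e1]] [r2 [h2 e2]]; exists (r1 ++ r2); split.
  by move=> u; rewrite mem_cat => /orP[/h1|/h2].
by move=> g; rewrite big_cat e1 e2.
Qed.

Lemma Ipow_opp k (c : T -> rat) : in_Ipow Lmul k c -> in_Ipow Lmul k (fun g => - c g).
Proof.
move=> [r [h e]]; exists [seq (- u.1, u.2) | u <- r]; split.
  by move=> u /mapP[v vr ->] /=; apply: h.
by move=> g; rewrite e big_map -sumrN; apply: eq_bigr => u _; rewrite mulNr.
Qed.

Lemma Ipow_shift k i (c : T -> rat) : in_Ipow Lmul k c -> in_Ipow Lmul k (fun g => c (g.1, g.2 - i)).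
Proof.
move=> [r [h e]]; exists [seq (u.1, shift i u.2) | u <- r]; split.
  by move=> u /mapP[v vr ->] /=; have [m hm hp] := h v vr; exists m => //; apply: IProd_shift.
by move=> g; rewrite e big_map; apply: eq_bigr => u _ /=; rewrite coef_shift.
Qed.

Definition zc (q : int) : seq (rat * T) := [:: (1, (0,q)); (-1, (0,0))].

Lemma zc_nat (n : nat) : in_Ipow Lmul 4 (coef (zc n)).
Proof.
elim: n => [|n IH].
  exists [::]; split => // g; rewrite big_nil /coef !big_cons big_nil /=.
  by case: eqP => _; rewrite ?addr0 ?subrr.
have := Ipow_add IH (Ipow_shift n base_Ipow).
apply: Ipow_ext => -[a b].
rewrite !coefcE /= !xpair_eqE.
case: (0 =P a) => ha /=; last by rewrite ?addr0.
rewrite /=; repeat (case: eqP => ?); by [lra | exfalso; lia].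
Qed.

Lemma zc_all (q : int) : in_Ipow Lmul 4 (coef (zc q)).
Proof.
case: q => n; first exact: zc_nat.
have := Ipow_opp (Ipow_shift (- n.+1%:Z) (zc_nat n.+1)).
apply: Ipow_ext => -[a b].
rewrite NegzE !coefcE /= !xpair_eqE.
case: (0 =P a) => ha /=; last by rewrite ?addr0 ?oppr0.
rewrite /=; repeat (case: eqP => ?); by [lra | exfalso; lia].
Qed.


Lemma Lmul_comm x y : Lmul x y = Lmul y x.
Proof. by rewrite /Lmul; congr pair; ring. Qed.

Lemma loop_ok : is_loop Lmul Le.
Proof.
have linv : forall a : T, cancel (Lmul a) (fun y => (y.1 - a.1, y.2 - a.2 - binom2 a.1 * binom2 (y.1 - a.1))).
  move=> [a1 a2] [x1 x2]; rewrite /Lmul /=.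
  have -> : a1 + x1 - a1 = x1 by ring.
  congr pair; ring.
have rinv : forall a : T, cancel (fun y => (y.1 - a.1, y.2 - a.2 - binom2 a.1 * binom2 (y.1 - a.1))) (Lmul a).
  by move=> [a1 a2] [x1 x2]; rewrite /Lmul /=; congr pair; ring.
split.
- by move=> [a b]; rewrite /Lmul /Le /= b20 mul0r !add0r addr0.
- by move=> [a b]; rewrite /Lmul /Le /= b20 mulr0 !addr0.
- by move=> a; exists (fun y => (y.1 - a.1, y.2 - a.2 - binom2 a.1 * binom2 (y.1 - a.1))).
- move=> a; exists (fun y => (y.1 - a.1, y.2 - a.2 - binom2 a.1 * binom2 (y.1 - a.1))).
    by move=> x; rewrite Lmul_comm linv.
  by move=> x; rewrite Lmul_comm rinv.
Qed.

Record prm := Prm { ps : int; pa : int; pb : int; pc : int }.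

Definition form (P : prm) (x : T) : T :=
  (x.1 + ps P, x.2 + pa P * binom2 x.1 + pb P * x.1 + pc P).

Definition fc (P Q : prm) : prm :=
  Prm (ps P + ps Q) (pa P + pa Q) (pb P + pb Q + pa P * ps Q)
      (pc P + pc Q + pa P * binom2 (ps Q) + pb P * ps Q).

Definition pinv (P : prm) : prm :=
  Prm (- ps P) (- pa P) (pa P * ps P - pb P)
      (- pa P * binom2 (- ps P) + pb P * ps P - pc P).

Lemma form_comp P Q x : form P (form Q x) = form (fc P Q) x.
Proof. case: x => a b; case: P => s1 a1 b1 c1; case: Q => s2 a2 b2 c2.
rewrite /form /fc /= b2D; congr pair; ring. Qed.

Lemma form_invl P x : form (pinv P) (form P x) = x.
Proof.
rewrite form_comp; case: x => a b; case: P => s1 a1 b1 c1.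
rewrite /form /fc /pinv /= b2N; congr pair; ring.
Qed.

Lemma form_invr P x : form P (form (pinv P) x) = x.
Proof.
rewrite form_comp; case: x => a b; case: P => s1 a1 b1 c1.
rewrite /form /fc /pinv /= b2N; congr pair; ring.
Qed.

Definition Pf (cond : prm -> Prop) (f : T -> T) := exists P, cond P /\ f =1 form P.

Lemma Pf_inv (f g : T -> T) P : f =1 form P -> cancel f g -> cancel g f -> g =1 form (pinv P).
Proof.
move=> e c1 c2 y.
have h : g (f (form (pinv P) y)) = form (pinv P) y := c1 _.
by rewrite e form_invr in h.
Qed.

Lemma gen_Pf (S : (T -> T) -> Prop) (cond : prm -> Prop) :
  cond (Prm 0 0 0 0) ->
  (forall P Q, cond P -> cond Q -> cond (fc P Q)) ->
  (forall P, cond P -> cond (pinv P)) ->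
  (forall f, S f -> Pf cond f) ->
  forall f, gen_group S f -> Pf cond f.
Proof.
move=> h0 hc hi hS f0 hf; elim: hf.
- exists (Prm 0 0 0 0); split=> // x; case: x => a b; rewrite /form /=; congr pair; ring.
- exact: hS.
- move=> f g _ [P [cP eP]] _ [Q [cQ eQ]]; exists (fc P Q); split; first exact: hc.
  by move=> x /=; rewrite eQ eP form_comp.
- move=> f g _ [P [cP eP]] c1 c2; exists (pinv P); split; first exact: hi.
  exact: Pf_inv eP c1 c2.
- by move=> f g _ [P [cP eP]] e; exists P; split=> // x; rewrite -e.
Qed.

Definition c1 (P : prm) := True.
Definition c2 (P : prm) := ps P = 0 /\ pa P = 0.
Definition c3 (P : prm) := [/\ ps P = 0, pa P = 0 & pb P = 0].
Definition c4 (P : prm) := [/\ ps P = 0, pa P = 0, pb P = 0 & pc P = 0].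

Lemma G_P1 : forall f, LMlt Lmul f -> Pf c1 f.
Proof.
apply: gen_Pf => //.
move=> f [a ->]; exists (Prm a.1 (binom2 a.1) 0 a.2); split=> // x.
by case: a x => a1 a2 [x1 x2]; rewrite /Lmul /form /=; congr pair; ring.
Qed.

Lemma comm_P (condH condR : prm -> Prop) (H : (T -> T) -> Prop) c :
  (forall f, H f -> Pf condH f) ->
  (forall P Q, condH Q -> condR (fc (pinv P) (fc (pinv Q) (fc P Q)))) ->
  comm_set (LMlt Lmul) H c -> Pf condR c.
Proof.
move=> hH hR [g [h [g' [h' [Gg Hh [cg1 cg2] [ch1 ch2] ->]]]]].
have [P [_ eP]] := G_P1 Gg.
have [Q [cQ eQ]] := hH h Hh.
have eg' := Pf_inv eP cg1 cg2.
have eh' := Pf_inv eQ ch1 ch2.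
exists (fc (pinv P) (fc (pinv Q) (fc P Q))); split; first exact: hR.
by move=> x /=; rewrite eQ eP eh' eg' (form_comp P Q) (form_comp (pinv Q)) (form_comp (pinv P)).
Qed.

Notation G := (LMlt Lmul).

Lemma lcs2_P : forall f, lcs G 2 f -> Pf c2 f.
Proof.
move=> f hf; change (gen_group (comm_set G G) f) in hf; move: f hf.
apply: gen_Pf.
- by [].
- by move=> [s a b c] [s' a' b' c'] [/= -> ->] [/= -> ->]; rewrite /c2 /=; split; ring.
- by move=> [s a b c] [/= -> ->]; rewrite /c2 /=; split; ring.
move=> f; apply: comm_P; first exact: G_P1.
by move=> [s a b c] [s' a' b' c'] _; rewrite /c2 /=; split; ring.
Qed.

Lemma lcs3_P : forall f, lcs G 3 f -> Pf c3 f.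
Proof.
move=> f hf; change (gen_group (comm_set G (lcs G 2)) f) in hf; move: f hf.
apply: gen_Pf.
- by [].
- by move=> [s a b c] [s' a' b' c'] [/= -> -> ->] [/= -> -> ->]; rewrite /c3 /=; split; ring.
- by move=> [s a b c] [/= -> -> ->]; rewrite /c3 /=; split; ring.
move=> f; apply: comm_P; first exact: lcs2_P.
by move=> [s a b c] [s' a' b' c'] [/= -> ->]; rewrite /c3 /=; split; ring.
Qed.

Lemma lcs4_P : forall f, lcs G 4 f -> Pf c4 f.
Proof.
move=> f hf; change (gen_group (comm_set G (lcs G 3)) f) in hf; move: f hf.
apply: gen_Pf.
- by [].
- by move=> [s a b c] [s' a' b' c'] [/= -> -> -> ->] [/= -> -> -> ->]; rewrite /c4 /= b20; split; ring.
- by move=> [s a b c] [/= -> -> -> ->]; rewrite /c4 /= oppr0 b20; split; ring.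
move=> f; apply: comm_P; first exact: lcs3_P.
move=> [s a b c] [s' a' b' c'] [/= -> -> ->]; rewrite /c4 /= !b20 !b2N.
rewrite ?oppr0 ?add0r ?addr0; split; ring.
Qed.

Lemma lcs4_triv f : lcs G 4 f -> f =1 id.
Proof.
move=> /lcs4_P [[s a b c] [[/= -> -> -> ->] e]] x.
by rewrite e; case: x => x1 x2; rewrite /form /=; congr pair; ring.
Qed.

Definition g1 : T -> T := Lmul (1, 0).
Definition g1' : T -> T := fun x => (x.1 - 1, x.2).
Definition h2 : T -> T := Lmul (2, 0).
Definition h2' : T -> T := fun x => (x.1 - 2, x.2 - binom2 (x.1 - 2)).
Definition cm2 : T -> T := g1' \o h2' \o g1 \o h2.
Definition cm2' : T -> T := fun x => (x.1, x.2 + x.1).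
Definition cm3 : T -> T := g1' \o cm2' \o g1 \o cm2.

Lemma cm2E x : cm2 x = (x.1, x.2 - x.1).
Proof.
case: x => a b; rewrite /cm2 /g1' /h2' /g1 /h2 /Lmul /= b21 b22.
have -> : 1 + (2 + a) - 2 = a + 1 by ring.
rewrite (b2D a 1) b21; congr pair; ring.
Qed.

Lemma lcs3_ex : lcs G 3 cm3 /\ ~ (cm3 =1 id).
Proof.
have Gg1 : G g1 by apply: gg_gen; exists (1, 0).
have cg1 : cancel g1 g1' /\ cancel g1' g1.
  by split=> -[a b]; rewrite /g1 /g1' /Lmul /= b21; congr pair; ring.
split.
  apply: gg_gen; exists g1, cm2, g1', cm2'; split => //.
  - apply: gg_gen; exists g1, h2, g1', h2'; split => //.
    + by apply: gg_gen; exists (2, 0).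
    + split=> -[a b]; rewrite /h2 /h2' /Lmul /= b22.
        have -> : 2 + a - 2 = a by ring.
        congr pair; ring.
      by congr pair; ring.
  - split=> -[a b]; [rewrite /cm2' cm2E /= | rewrite cm2E /cm2' /=]; congr pair; ring.
move=> /(_ (0, 0)); rewrite /cm3 /= cm2E /g1 /g1' /cm2' /Lmul /= b21.
by move=> /(congr1 snd) /= h; lia.
Qed.


Lemma Dk_iff k g : (2 <= k <= 4)%N -> (Dsub Lmul Le k g <-> g.1 = 0).
Proof.
move=> /andP[h2 h4]; split; first exact: Dsub_2.
case: g => a b /= ->; exact: (Ipow_mono h4 (zc_all b)).
Qed.

Theorem proposition3p3 :
  (is_loop Lmul Le /\ (forall x y, Lmul x y = Lmul y x)) /\
  tf_nilpotent_class Lmul Le 4 /\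
  (forall g, Dsub Lmul Le 2 g <-> g.1 = 0) /\
  (forall g, Dsub Lmul Le 3 g <-> g.1 = 0) /\
  (forall g, Dsub Lmul Le 4 g <-> g.1 = 0) /\
  group_nilpotent_class (LMlt Lmul) 3.
Proof.
split.
  split; first exact: loop_ok.
  exact: Lmul_comm.
split.
  split; first by move=> g; apply: Dsub_5.
  by exists (0, 1); split; [exact: (zc_all 1) | by []].
split; first by move=> g; apply: Dk_iff.
split; first by move=> g; apply: Dk_iff.
split; first by move=> g; apply: Dk_iff.
split; first by move=> f; apply: lcs4_triv.
by exists cm3; exact: lcs3_ex.
Qed.
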